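(* Let $f:2^V\to\mathbb{Z}_{\ge0}$ be a connectivity function, $T$ a branch decomposition of $f$, $r\in E(T)$, and $(r,C_1,C_2,C_3)$ a global $T$-improvement. Then for every $i\in\{1,2,3\}$ and every node $w\in V(T)$ it holds that $f(T_r[w]\cap C_i)\le f(T_r[w])$. Moreover, if $T_r[w]\cap C_i\neq\emptyset$, then $f(T_r[w]\cap C_i)=f(T_r[w])$ if and only if $T_r[w]\subseteq C_i$.
   Context: A connectivity function $f:2^V\to\mathbb{Z}_{\ge0}$ ($V$ finite) satisfies $f(\emptyset)=0$, $f(X)=f(V\setminus X)$, and $f(X\cup Y)+f(X\cap Y)\le f(X)+f(Y)$. A branch decomposition of $f$ is a tree $T$ whose nodes have degree 1 or 3 together with a bijection from $V$ to its leaves; elements of $V$ are identified with leaves. For an edge $uv$ of $T$, $T[uv]$ denotes the set of leaves closer to $u$ than to $v$. For an edge $r=uv$ and a node $w$, the $r$-subtree of $w$ consists of the nodes $x$ such that $w$ lies on the unique path from $x$ to the edge $r$ (including $w$), and $T_r[w]\subseteq V$ is the set of leaves in the $r$-subtree of $w$ (so $T_r[u]=T[uv]$, $T_r[v]=T[vu]$). For $W\subseteq V$, a $W$-improvement is a tripartition $(C_1,C_2,C_3)$ of $V$ (pairwise disjoint, possibly empty, union $V$) with $f(C_i)<f(W)/2$, $f(C_i\cap W)<f(W)$, $f(C_i\cap(V\setminus W))<f(W)$ for each $i$. Its width is $\max_i f(C_i)$, its sum-width is $\sum_i f(C_i)$, and its arity is the number of nonempty $C_i$. A $W$-improvement is minimum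 if it has minimum width among all $W$-improvements, subject to that minimum arity, and subject to those minimum sum-width. For $r=uv\in E(T)$ and $W=T[uv]$, a $T$-improvement on $r$ is a tuple $(r,C_1,C_2,C_3)$ where $(C_1,C_2,C_3)$ is a minimum $W$-improvement; it intersects a node $w$ if $T_r[w]$ intersects at least two of $C_1,C_2,C_3$. A global $T$-improvement is a $T$-improvement on $r$ that intersects the minimum number of nodes of $T$ among all $T$-improvements on $r$. *)

(* Defs.v *)
From mathcomp Require Import all_boot.
From mathcomp Require Import boolp.
Set Implicit Arguments. Unset Strict Implicit. Unset Printing Implicit Defensive.

Section Defs.
Variables (V N : finType).

Definition connectivity (f : {set V} -> nat) : Prop :=
  [/\ f set0 = 0,
      forall X, f X = f (~: X) &
      forall X Y, f (X :|: Y) + f (X :&: Y) <= f X + f Y].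

(* p is the simple path x :: p from x to y *)
Definition tpath (e : rel N) (x y : N) (p : seq N) : Prop :=
  [/\ path e x p, last x p = y & uniq (x :: p)].

Definition is_tree (e : rel N) : Prop :=
  forall x y, exists! p, tpath e x y p.

Definition deg (e : rel N) (x : N) : nat := #|[set y | e x y]|.

Definition branch_decomposition (e : rel N) (leaf : V -> N) : Prop :=
  [/\ symmetric e, irreflexive e, is_tree e,
      forall x, deg e x = 1 \/ deg e x = 3 &
      injective leaf /\ (forall x, deg e x = 1 <-> exists a, leaf a = x)].

(** x is in the r-subtree of w (r = uv): w lies on the unique path from x to
    the edge r (the path from x to the nearer endpoint of r, not containing the
    other endpoint). *)
Definition in_rsubtree (e : rel N) (u v w x : N) : Prop :=
  (exists p, tpath e x u p /\ v \notin x :: p /\ w \in x :: p) \/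
  (exists p, tpath e x v p /\ u \notin x :: p /\ w \in x :: p).

Definition Tr (e : rel N) (leaf : V -> N) (u v w : N) : {set V} :=
  [set a | `[< in_rsubtree e u v w (leaf a) >]].

(** T[uv] := T_r[u] for r = uv : leaves closer to u than to v. *)
Definition Tside (e : rel N) (leaf : V -> N) (u v : N) : {set V} :=
  Tr e leaf u v u.

Definition tripartition (C : 'I_3 -> {set V}) : Prop :=
  (forall i j, i != j -> [disjoint C i & C j]) /\ \bigcup_i C i = setT.

Definition improvement (f : {set V} -> nat) (W : {set V})
  (C : 'I_3 -> {set V}) : Prop :=
  tripartition C /\
  forall i, [/\ 2 * f (C i) < f W, f (C i :&: W) < f W &
                f (C i :&: ~: W) < f W].

Definition width (f : {set V} -> nat) (C : 'I_3 -> {set V}) : nat :=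
  \max_i f (C i).
Definition sum_width (f : {set V} -> nat) (C : 'I_3 -> {set V}) : nat :=
  \sum_i f (C i).
Definition arity (C : 'I_3 -> {set V}) : nat := #|[set i | C i != set0]|.

Definition min_improvement (f : {set V} -> nat) (W : {set V})
  (C : 'I_3 -> {set V}) : Prop :=
  improvement f W C /\
  forall D, improvement f W D ->
    width f C < width f D \/
    (width f C = width f D /\
      (arity C < arity D \/
       (arity C = arity D /\ sum_width f C <= sum_width f D))).

Definition T_improvement (f : {set V} -> nat) (e : rel N) (leaf : V -> N)
  (u v : N) (C : 'I_3 -> {set V}) : Prop :=
  e u v /\ min_improvement f (Tside e leaf u v) C.

Definition intersects (e : rel N) (leaf : V -> N) (u v : N)
  (C : 'I_3 -> {set V}) (w : N) : bool :=
  1 < #|[set i | Tr e leaf u v w :&: C i != set0]|.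

Definition n_intersected (e : rel N) (leaf : V -> N) (u v : N)
  (C : 'I_3 -> {set V}) : nat :=
  #|[set w | intersects e leaf u v C w]|.

Definition global_T_improvement (f : {set V} -> nat) (e : rel N)
  (leaf : V -> N) (u v : N) (C : 'I_3 -> {set V}) : Prop :=
  T_improvement f e leaf u v C /\
  forall D, T_improvement f e leaf u v D ->
    n_intersected e leaf u v C <= n_intersected e leaf u v D.

End Defs.

(* Main.v *)
Require Import Defs.
From mathcomp Require Import all_boot.
From mathcomp Require Import boolp.
From mathcomp Require Import zify.
Set Implicit Arguments. Unset Strict Implicit. Unset Printing Implicit Defensive.

Section TreePart.
Variables (N : finType) (e : rel N).
Hypothesis esym : symmetric e.
Hypothesis tree : is_tree e.

Lemma tpath_uniq x y p q : tpath e x y p -> tpath e x y q -> p = q.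
Proof. move=> Hp Hq; case: (tree x y) => r [_ Hr]. by rewrite -(Hr p Hp) (Hr q Hq). Qed.

Definition side u v a := exists p, tpath e a u p /\ v \notin a :: p.
Definition sub1 u v w a := exists p, tpath e a u p /\ v \notin a :: p /\ w \in a :: p.

Lemma no_both u v a : e u v -> side u v a -> side v u a -> False.
Proof.
move=> euv [p [[Hp Hl Hu] Hv]] [q [Hq Hu']]; subst u.
have Ht : tpath e a v (rcons p v).
  split; first by rewrite rcons_path Hp euv.
    by rewrite last_rcons.
  by rewrite -rcons_cons rcons_uniq Hv Hu.
have Eq := tpath_uniq Ht Hq. move: Hu'; rewrite -Eq -rcons_cons mem_rcons inE.
by rewrite mem_last orbT.
Qed.

Lemma suffix_tpath a y p w : tpath e a y p -> w \in a :: p ->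
  exists q, tpath e w y q /\ w :: q = drop (index w (a :: p)) (a :: p).
Proof.
move=> [Hp Hl Hu] Hw.
have Hn : index w (a :: p) < size (a :: p) by rewrite index_mem.
have Hd := drop_nth w Hn. rewrite nth_index // in Hd.
exists (drop (index w (a :: p)).+1 (a :: p)); split => //.
rewrite /tpath; split.
- have : sorted e (drop (index w (a :: p)) (a :: p)) by apply: drop_sorted.
  by rewrite Hd.
- rewrite -Hl.
  have E1 : last a p = last a (take (index w (a :: p)) (a :: p) ++ drop (index w (a :: p)) (a :: p)).
    by rewrite cat_take_drop.
  by rewrite E1 last_cat Hd.
- by rewrite -Hd drop_uniq.
Qed.

Lemma sub1_side u v w a : sub1 u v w a -> side u v w /\ side u v a.
Proof.
move=> [p [Ht [Hv Hw]]]; split; last by exists p.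
have [q [Hq Eq]] := suffix_tpath Ht Hw.
exists q; split => //. rewrite Eq. apply/negP => /mem_drop. by apply/negP.
Qed.

Lemma side_sub1 u v a : side u v a -> sub1 u v u a.
Proof.
move=> [p [Ht Hv]]; exists p; split => //; split => //.
case: Ht => _ <- _. exact: mem_last.
Qed.

Lemma sub1_bad u v a : sub1 v u u a -> False.
Proof. by move=> [p [_ [Hu Hu']]]; move: Hu; rewrite Hu'. Qed.

Lemma drop_index_cmp (s : seq N) w x : w \in s -> x \in s ->
  x \in drop (index w s) s \/ w \in drop (index x s) s.
Proof.
have gen : forall w x, w \in s -> x \in s -> index w s <= index x s ->
   x \in drop (index w s) s.
  move=> w' x' Hw Hx Hle.
  have Hxs : index x' s < size s by rewrite index_mem.
  rewrite -{1}(nth_index x' Hx).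
  have -> : nth x' s (index x' s) = nth x' (drop (index w' s) s) (index x' s - index w' s).
    by rewrite nth_drop subnKC.
  apply: mem_nth. rewrite size_drop. apply: ltn_sub2r => //. exact: leq_ltn_trans Hle Hxs.
move=> Hw Hx; case: (leqP (index w s) (index x s)) => H.
  by left; apply: gen.
by right; apply: gen => //; apply: ltnW.
Qed.

Lemma in_rsub_sym u v w x : in_rsubtree e u v w x <-> in_rsubtree e v u w x.
Proof. rewrite /in_rsubtree; tauto. Qed.

Lemma in_rsub_split u v w x : in_rsubtree e u v w x <-> sub1 u v w x \/ sub1 v u w x.
Proof. by []. Qed.

Lemma lam1 u v a p w x : e u v -> tpath e a u p -> v \notin a :: p -> w \in a :: p ->
  x \in drop (index w (a :: p)) (a :: p) ->
  forall b, in_rsubtree e u v w b -> in_rsubtree e u v x b.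
Proof.
move=> euv Ht Hv Hw Hx b.
have [p1 [Hp1 Ep1]] := suffix_tpath Ht Hw.
have sidew : side u v w.
  exists p1; split => //. rewrite Ep1; apply/negP => /mem_drop; by apply/negP.
rewrite !in_rsub_split => -[[q [Hq [Hqv Hqw]]]|Hb].
- have [q1 [Hq1 Eq1]] := suffix_tpath Hq Hqw.
  have E := tpath_uniq Hq1 Hp1. subst q1.
  left; exists q; split => //; split => //.
  rewrite -Ep1 Eq1 in Hx. exact: mem_drop Hx.
- have [sw _] := sub1_side Hb. by case: (no_both euv sidew sw).
Qed.

Variables (V : finType) (leaf : V -> N).

Lemma inTr u v w a : (a \in Tr e leaf u v w) <-> in_rsubtree e u v w (leaf a).
Proof. by rewrite inE; split => /asboolP. Qed.

Lemma Tr_sym u v w : Tr e leaf u v w = Tr e leaf v u w.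
Proof. apply/setP => a. apply/idP/idP => /inTr H; apply/inTr; by apply/in_rsub_sym. Qed.

Lemma Tside_char u v a : (a \in Tside e leaf u v) <-> side u v (leaf a).
Proof.
rewrite /Tside inTr in_rsub_split; split.
- by case => [/sub1_side [] | /sub1_bad].
- by move=> /side_sub1; left.
Qed.

Lemma Tr_sides u v w : e u v ->
  Tr e leaf u v w \subset Tside e leaf u v \/ Tr e leaf u v w \subset ~: Tside e leaf u v.
Proof.
move=> euv.
have evu : e v u by rewrite esym.
case: (pselect (side u v w)) => Hs; [left|right]; apply/subsetP => a /inTr;
  rewrite in_rsub_split => -[] /sub1_side [H1 H2].
- by apply/Tside_char.
- by case: (no_both euv Hs H1).
- by case: (Hs H1).
- rewrite inE; apply/negP => /Tside_char H3. exact: (no_both euv H3 H2).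
Qed.

Lemma lam_side u v a w x : e u v -> sub1 u v w a -> sub1 u v x a ->
  Tr e leaf u v w \subset Tr e leaf u v x \/ Tr e leaf u v x \subset Tr e leaf u v w.
Proof.
move=> euv [p [Hp [Hv Hw]]] [p' [Hp' [Hv' Hx]]].
have E := tpath_uniq Hp' Hp. subst p'.
case: (drop_index_cmp Hw Hx) => H; [left|right]; apply/subsetP => b /inTr Hb;
  apply/inTr.
- exact: (lam1 euv Hp Hv Hw H).
- exact: (lam1 euv Hp Hv Hx H).
Qed.

Lemma laminar u v w x a : e u v -> a \in Tr e leaf u v w -> a \in Tr e leaf u v x ->
  Tr e leaf u v w \subset Tr e leaf u v x \/ Tr e leaf u v x \subset Tr e leaf u v w.
Proof.
move=> euv.
have evu : e v u by rewrite esym.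
move=> /inTr /in_rsub_split [H1|H1] /inTr /in_rsub_split [H2|H2].
- exact: (lam_side euv H1 H2).
- have [_ s1] := sub1_side H1. have [_ s2] := sub1_side H2.
  by case: (no_both euv s1 s2).
- have [_ s1] := sub1_side H1. have [_ s2] := sub1_side H2.
  by case: (no_both euv s2 s1).
- rewrite !(Tr_sym u v). exact: (lam_side evu H1 H2).
Qed.

End TreePart.

Section SetPart.
Variables (V : finType) (f : {set V} -> nat).
Hypothesis conn : connectivity f.

Lemma f0 : f set0 = 0. Proof. by case: conn. Qed.
Lemma fC X : f (~: X) = f X. Proof. by case: conn => _ H _; rewrite -H. Qed.
Lemma fsub X Y : f (X :|: Y) + f (X :&: Y) <= f X + f Y. Proof. by case: conn. Qed.

Lemma posimod A X : f (A :\: X) + f (X :\: A) <= f X + f A.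
Proof.
have H := fsub X (~: A).
have E : X :|: ~: A = ~: (A :\: X) by rewrite setDE setCI setCK setUC.
by rewrite E fC fC -setDE in H.
Qed.

Lemma improvement_C W D : improvement f W D -> improvement f (~: W) D.
Proof.
move=> [Ht H]; split => // j; case: (H j) => a b c.
by rewrite fC setCK; split.
Qed.

Lemma improvement_CE W D : improvement f W D <-> improvement f (~: W) D.
Proof.
split; first exact: improvement_C.
by move=> /improvement_C; rewrite setCK.
Qed.

Lemma min_improvement_C W C : min_improvement f W C -> min_improvement f (~: W) C.
Proof.
move=> [HC Hm]; split; first exact: improvement_C.
by move=> D /improvement_CE; rewrite setCK => /Hm.
Qed.

Lemma disjP (A B : {set V}) : (forall a, a \in A -> a \in B -> False) -> [disjoint A & B].
Proof.
move=> H; rewrite -setI_eq0; apply/eqP/setP => a; rewrite inE in_set0.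
by apply/negP => /andP[]; apply: H.
Qed.

Definition Dmod (C : 'I_3 -> {set V}) (X : {set V}) (i : 'I_3) : 'I_3 -> {set V} :=
  fun j => if j == i then C i :|: X else C j :\: X.

Lemma Dmod_i_le (C : 'I_3 -> {set V}) (X : {set V}) i : f X <= f (X :&: C i) -> f (C i :|: X) <= f (C i).
Proof. move=> H; have := fsub (C i) X; rewrite setIC; lia. Qed.

Lemma Dmod_i_lt (C : 'I_3 -> {set V}) (X : {set V}) i : f X < f (X :&: C i) -> f (C i :|: X) < f (C i).
Proof. move=> H; have := fsub (C i) X; rewrite setIC; lia. Qed.

Lemma Dmod_improvement0 W (C : 'I_3 -> {set V}) (X : {set V}) i : improvement f W C -> X \subset W ->
  f X <= f (X :&: C i) -> (forall j, j != i -> f X <= f (X :\: C j)) ->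
  improvement f W (Dmod C X i) /\ (forall j, f (Dmod C X i j) <= f (C j)).
Proof.
move=> [[Hdisj Hcov] HC] XW Hi Hj.
have Hle : forall j, f (Dmod C X i j) <= f (C j).
  move=> j; rewrite /Dmod; case: eqP => [->|/eqP ne]; first exact: Dmod_i_le.
  have := posimod (C j) X; have := Hj j ne; lia.
split => //; split; first split.
- have Hd : forall j k a, j != k -> a \in C j -> a \in C k -> False.
    move=> j k a jk aj ak; have := disjointFr (Hdisj j k jk) aj; by rewrite ak.
  move=> j k jk; apply/disjP => a; rewrite /Dmod.
  case: eqP => [ji|/eqP ji]; case: eqP => [ki|/eqP ki]; rewrite !inE.
  + by move: jk; rewrite ji ki eqxx.
  + subst j => /orP[ai|aX] /andP[naX ak]; first by apply: (Hd i k a) => //; rewrite eq_sym.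
    by rewrite aX in naX.
  + subst k => /andP[naX aj] /orP[ai|aX]; first exact: (Hd j i a).
    by rewrite aX in naX.
  + move=> /andP[_ aj] /andP[_ ak]; exact: (Hd j k a).
- apply/setP => a; rewrite inE; apply/bigcupP.
  case: (boolP (a \in X)) => aX.
    by exists i => //; rewrite /Dmod eqxx inE aX orbT.
  have : a \in \bigcup_j C j by rewrite Hcov inE.
  case/bigcupP => j _ aj; exists j => //; rewrite /Dmod; case: eqP => [ji|_].
    by subst j; rewrite inE aj.
  by rewrite inE aX aj.
- move=> j; case: (HC j) => h1 h2 h3; split.
  + have := Hle j; lia.
  + rewrite /Dmod; case: eqP => [ji|/eqP ne]; first subst j.
    * rewrite setIUl (setIidPl XW).
      have := fsub (C i :&: W) X.
      rewrite -setIA (setIidPr XW) => H.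
      rewrite setIC in Hi; lia.
    * rewrite setIDAC.
      have := posimod (C j :&: W) X.
      have -> : X :\: (C j :&: W) = X :\: C j.
        by rewrite setDIr (_ : X :\: W = set0) ?setU0 //; apply/eqP; rewrite setD_eq0.
      have := Hj j ne; move: (HC j) => [_ h2' _]; lia.
  + rewrite /Dmod; case: eqP => [ji|/eqP ne]; first subst j.
    * rewrite setIUl.
      have -> : X :&: ~: W = set0 by apply/eqP; rewrite setI_eq0 disjoints_subset setCK.
      by rewrite setU0; case: (HC i).
    * rewrite setIDAC.
      have -> : C j :&: ~: W :\: X = C j :&: ~: W.
        apply/setDidPl; rewrite disjoint_sym; apply: disjointWl XW _.
        by rewrite disjoint_sym disjoints_subset subsetIr.
      exact: h3.
Qed.

Lemma Dmod_improvement W (C : 'I_3 -> {set V}) (X : {set V}) i : improvement f W C ->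
  (X \subset W \/ X \subset ~: W) ->
  f X <= f (X :&: C i) -> (forall j, j != i -> f X <= f (X :\: C j)) ->
  improvement f W (Dmod C X i) /\ (forall j, f (Dmod C X i j) <= f (C j)).
Proof.
move=> HC [XW|XW] Hi Hj; first exact: Dmod_improvement0.
have [H1 H2] := Dmod_improvement0 (improvement_C HC) XW Hi Hj.
by split => //; apply/improvement_CE.
Qed.

Lemma width_le (C D : 'I_3 -> {set V}) : (forall j, f (D j) <= f (C j)) -> width f D <= width f C.
Proof.
move=> H; apply/bigmax_leqP => j _; apply: leq_trans (H j) _.
exact: (leq_bigmax (F := fun k => f (C k))).
Qed.

Lemma sum_le (C D : 'I_3 -> {set V}) : (forall j, f (D j) <= f (C j)) -> sum_width f D <= sum_width f C.
Proof. by move=> H; apply: leq_sum => j _. Qed.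

Lemma sum_lt (C D : 'I_3 -> {set V}) i : (forall j, f (D j) <= f (C j)) -> f (D i) < f (C i) ->
  sum_width f D < sum_width f C.
Proof.
move=> H Hi; rewrite /sum_width (bigD1 i) //= [X in _ < X](bigD1 i) //=.
have : \sum_(j < 3 | j != i) f (D j) <= \sum_(j < 3 | j != i) f (C j) by apply: leq_sum.
move: Hi; set a := \sum_(j < 3 | j != i) f (D j); set b := \sum_(j < 3 | j != i) f (C j).
move=> Hi Hab; lia.
Qed.

Lemma arity_le (C D : 'I_3 -> {set V}) : (forall j, D j != set0 -> C j != set0) -> arity D <= arity C.
Proof. move=> H; apply: subset_leq_card; apply/subsetP => j; rewrite !inE; exact: H. Qed.

Lemma Dmod_ne (C : 'I_3 -> {set V}) X i : X :&: C i != set0 ->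
  forall j, Dmod C X i j != set0 -> C j != set0.
Proof.
move=> NE j; rewrite /Dmod; case: (j =P i) => [ji|_].
  move=> _; subst j; case/set0Pn: NE => a; rewrite inE => /andP[_ ai].
  by apply/set0Pn; exists a.
case/set0Pn => a; rewrite inE => /andP[_ aj]; by apply/set0Pn; exists a.
Qed.

Lemma part1 W (C : 'I_3 -> {set V}) (i : 'I_3) : min_improvement f W C ->
  forall X : {set V}, (X \subset W \/ X \subset ~: W) -> f (X :&: C i) <= f X.
Proof.
move=> [HC Hmin].
have main : forall n (X : {set V}), #|X| < n -> (X \subset W \/ X \subset ~: W) -> f (X :&: C i) <= f X.
  elim => [//|n IH] X Hn HXW.
  rewrite leqNgt; apply/negP => Hlt.
  have [[Hdisj Hcov] _] := HC.
  have Hj : forall j, j != i -> f X <= f (X :\: C j).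
    move=> j ne.
    case: (boolP (X :&: C j == set0)) => [/eqP E|NE].
      have -> : X :\: C j = X by apply/setDidPl; rewrite -setI_eq0 E.
      done.
    have Hlt2 : #|X :\: C j| < n.
      rewrite cardsD. have : 0 < #|X :&: C j| by rewrite card_gt0.
      have : #|X :&: C j| <= #|X| by apply: subset_leq_card; apply: subsetIl.
      move: Hn; set p := #|X|; set q := #|X :&: C j|. lia.
    have Hs : X :\: C j \subset W \/ X :\: C j \subset ~: W.
      by case: HXW => H; [left|right]; apply: subset_trans (subsetDl _ _) H.
    have := IH (X :\: C j) Hlt2 Hs.
    have -> : (X :\: C j) :&: C i = X :&: C i.
      rewrite setIDAC; apply/setDidPl; apply: disjointWl (subsetIr X (C i)) _.
      by apply: Hdisj; rewrite eq_sym.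
    move: Hlt; set p := f (X :&: C i). lia.
  have [HD Hle] := Dmod_improvement HC HXW (ltnW Hlt) Hj.
  have Hlt' : f (Dmod C X i i) < f (C i) by rewrite /Dmod eqxx; exact: Dmod_i_lt.
  have NE : X :&: C i != set0.
    apply/negP => /eqP E; move: Hlt; rewrite E f0.  done.
  have w1 := width_le Hle. have a1 := arity_le (Dmod_ne NE).
  have s1 := sum_lt Hle Hlt'.
  have := Hmin _ HD. lia.
move=> X; exact: main.
Qed.

End SetPart.

Lemma idx_sub (V : finType) (C : 'I_3 -> {set V}) (X Y : {set V}) i :
  X :&: C i != set0 -> (Y :&: X = set0 \/ X \subset Y) ->
  [set k | Y :&: Dmod C X i k != set0] \subset [set k | Y :&: C k != set0].
Proof.
move=> NE HY; apply/subsetP => k; rewrite !inE /Dmod; case: (k =P i) => [ki|_].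
  subst k; case: HY => [E|XY].
    by rewrite setIUr E setU0.
  move=> _; case/set0Pn: NE => a; rewrite inE => /andP[aX ai].
  apply/set0Pn; exists a; by rewrite inE ai (subsetP XY a aX).
case/set0Pn => a; rewrite !inE => /and3P[aY _ ak].
by apply/set0Pn; exists a; rewrite inE aY ak.
Qed.

Lemma idx_small (V : finType) (C : 'I_3 -> {set V}) (X Y : {set V}) i :
  Y \subset X -> #|[set k | Y :&: Dmod C X i k != set0]| <= 1.
Proof.
move=> YX; apply: (@leq_trans #|[set i]|); last by rewrite cards1.
apply: subset_leq_card; apply/subsetP => k.
rewrite !inE /Dmod; case: (k =P i) => [ki|_] //.
case/set0Pn => a; rewrite !inE => /and3P[aY naX _].
by rewrite (subsetP YX a aY) in naX.
Qed.

Theorem theorem6 (V N : finType) (f : {set V} -> nat) (e : rel N)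
  (leaf : V -> N) (u v : N) (C : 'I_3 -> {set V}) :
  connectivity f ->
  branch_decomposition e leaf ->
  e u v ->
  global_T_improvement f e leaf u v C ->
  forall (i : 'I_3) (w : N),
    f (Tr e leaf u v w :&: C i) <= f (Tr e leaf u v w) /\
    (Tr e leaf u v w :&: C i != set0 ->
      (f (Tr e leaf u v w :&: C i) = f (Tr e leaf u v w) <->
       Tr e leaf u v w \subset C i)).
Proof.
move=> conn [esy _ tree _ _] euv [[_ Cmin] Hglob] i w.
have HXW := Tr_sides esy tree leaf w euv.
set X := Tr e leaf u v w in HXW *.
set W := Tside e leaf u v in Cmin HXW.
have P1 := part1 conn i Cmin.
split; first exact: P1.
move=> NE; split; last by move/setIidPl => ->.
move=> Eq; apply/contraT => Nsub.
have [[[Hdisj Hcov] _] Hmin] := Cmin.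
have Hj : forall j, j != i -> f X <= f (X :\: C j).
  move=> j ne.
  have Hs : X :\: C j \subset W \/ X :\: C j \subset ~: W.
    by case: HXW => H; [left|right]; apply: subset_trans (subsetDl _ _) H.
  have := P1 _ Hs.
  have -> : (X :\: C j) :&: C i = X :&: C i.
    rewrite setIDAC; apply/setDidPl; apply: disjointWl (subsetIr X (C i)) _.
    by apply: Hdisj; rewrite eq_sym.
  by rewrite Eq.
have [HD Hle] := Dmod_improvement conn (proj1 Cmin) HXW (eq_leq (esym Eq)) Hj.
set D := Dmod C X i in HD Hle.
have w1 := width_le Hle. have a1 : arity D <= arity C := arity_le (Dmod_ne NE).
have s1 := sum_le Hle.
have Dmin : min_improvement f W D.
  split => // E HE. have := Hmin E HE. have := Hmin D HD. lia.
have := Hglob D (conj euv Dmin).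
move=> Hg; suff Hlt : n_intersected e leaf u v D < n_intersected e leaf u v C by rewrite leqNgt Hlt in Hg.
apply: proper_card; apply/properP; split.
- apply/subsetP => x; rewrite !inE /intersects => Hx.
  case: (boolP (Tr e leaf u v x :&: X == set0)) => [/eqP E|NE2].
    apply: leq_trans Hx _; apply: subset_leq_card; apply: idx_sub => //; by left.
  case/set0Pn: NE2 => a; rewrite inE => /andP[ax aX].
  case: (laminar esy tree euv aX ax) => H.
    apply: leq_trans Hx _; apply: subset_leq_card; apply: idx_sub => //; by right.
  have := idx_small C i H. rewrite -/D. move: Hx.
  set p := #|_|. lia.
- exists w; rewrite !inE /intersects -/X.
  + case/subsetPn: Nsub => a aX nai.
    have : a \in \bigcup_j C j by rewrite Hcov inE.
    case/bigcupP => j _ aj.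
    have ji : i != j by apply/eqP => E; subst j; rewrite aj in nai.
    apply: (@leq_trans #|[set i; j]|); first by rewrite cards2 ji.
    apply: subset_leq_card; apply/subsetP => k.
    rewrite !inE => /orP[/eqP ->|/eqP ->] //.
    by apply/set0Pn; exists a; rewrite inE aX aj.
  + rewrite -ltnNge ltnS. exact: idx_small.
Qed.
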